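(* Let $A$ be a subset of a Hausdorff topological vector space over $\mathbb{R}$. Consider: (i) $A$ is topologically linearly independent; (ii) $A$ is topologically independent; (iii) $A$ is linearly independent. Then (i) implies (ii) and (ii) implies (iii). Moreover, if $A$ is finite, then (i), (ii), (iii) are equivalent.
   Context: Let $X$ be a topological vector space with zero $0$. A subset $A\subseteq X\setminus\{0\}$ is topologically linearly independent if for every neighborhood $W$ of $0$ there is a neighborhood $U$ of $0$ such that for every finite $F\subseteq A$ and reals $\{r_a: a\in F\}$, $\sum_{a\in F}r_a a\in U$ implies $r_a a\in W$ for all $a\in F$. A subset $A\subseteq X\setminus\{0\}$ is topologically independent if the same holds with the reals $r_a$ replaced by integers $z_a$. *)

(* Defs.v *)
From HB Require Import structures.
From mathcomp Require Import all_boot all_order all_algebra.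
From mathcomp Require Import all_classical all_reals all_analysis.
Set Implicit Arguments. Unset Strict Implicit. Unset Printing Implicit Defensive.
Import Order.TTheory GRing.Theory Num.Theory.
Local Open Scope classical_set_scope.
Local Open Scope ring_scope.

(* A finite subset F of A is represented by a duplicate-free sequence s
   whose elements lie in A; coefficients by a function on E. *)

Definition top_lin_indep (R : realType) (E : topologicalLmodType R) (A : set E) : Prop :=
  A `<=` ~` [set 0] /\
  forall W : set E, nbhs (0 : E) W ->
  exists U : set E, nbhs (0 : E) U /\
    forall (s : seq E) (r : E -> R), uniq s -> (forall a, a \in s -> A a) ->
      U (\sum_(a <- s) r a *: a) -> forall a, a \in s -> W (r a *: a).

Definition top_indep (R : realType) (E : topologicalLmodType R) (A : set E) : Prop :=
  A `<=` ~` [set 0] /\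
  forall W : set E, nbhs (0 : E) W ->
  exists U : set E, nbhs (0 : E) U /\
    forall (s : seq E) (z : E -> int), uniq s -> (forall a, a \in s -> A a) ->
      U (\sum_(a <- s) a *~ z a) -> forall a, a \in s -> W (a *~ z a).

Definition lin_indep (R : realType) (E : topologicalLmodType R) (A : set E) : Prop :=
  forall (s : seq E) (r : E -> R), uniq s -> (forall a, a \in s -> A a) ->
    \sum_(a <- s) r a *: a = 0 -> forall a, a \in s -> r a = 0.

(* Main.v *)
Require Import Defs.
From HB Require Import structures.
From mathcomp Require Import all_boot all_order all_algebra.
From mathcomp Require Import all_classical all_reals all_analysis.
From mathcomp Require Import ring lra.
Set Implicit Arguments. Unset Strict Implicit. Unset Printing Implicit Defensive.
Import Order.TTheory GRing.Theory Num.Theory.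
Import numFieldNormedType.Exports.
Local Open Scope classical_set_scope.
Local Open Scope ring_scope.
Lemma pigeon (R : realType) (k q : nat) (c : 'I_k -> R) :
  exists n1 n2 : nat, n1 != n2 /\ forall i,
   `|(n2%:R - n1%:R) * c i - ((Num.floor (n2%:R * c i))%:~R - (Num.floor (n1%:R * c i))%:~R)| < q.+1%:R^-1.
Proof.
pose fr (n : nat) (i : 'I_k) : R := n%:R * c i - (Num.floor (n%:R * c i))%:~R.
have fr_ge0 n i : 0 <= fr n i by rewrite subr_ge0 floor_le.
have fr_lt1 n i : fr n i < 1 by rewrite ltrBlDl -[_ + 1]/(_ + (1%:~R)) -rmorphD floorD1_gt.
pose key (n : nat) (i : 'I_k) : int := Num.floor (q.+1%:R * fr n i).
have key_ge0 n i : 0 <= key n i by rewrite floor_ge0 mulr_ge0.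
have key_lt n i : key n i < q.+1%:Z.
  rewrite floor_lt_int -pmulrn.
  by rewrite -[X in _ < X]mulr1 ltr_pM2l // ltr0n.
pose g (n : 'I_(q.+1 ^ k).+1) : {ffun 'I_k -> 'I_q.+1} := [ffun i => inord `|key n i|%N].
have ninj : ~ injective g.
  move=> inj; have := leq_card g inj.
  by rewrite card_ffun !card_ord ltnn.
have [n1 [n2 [E N]]] : exists n1 n2, g n1 = g n2 /\ n1 != n2.
  apply: contrapT => H; apply: ninj => x y gxy; apply/eqP; apply/negP => /negP nxy.
  by apply: H; exists x, y.
exists (val n1), (val n2); split => // i.
have := congr1 (fun f : {ffun 'I_k -> 'I_q.+1} => val (f i)) E; rewrite /g !ffunE /= !inordK; first last.
- by rewrite -ltz_nat gez0_abs.
- by rewrite -ltz_nat gez0_abs.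
move/(congr1 Posz); rewrite !gez0_abs // => Ek.
have h1 := floor_le (q.+1%:R * fr n1 i).
have h2 := floorD1_gt (q.+1%:R * fr n1 i).
have h3 := floor_le (q.+1%:R * fr n2 i).
have h4 := floorD1_gt (q.+1%:R * fr n2 i).
rewrite -/(key n1 i) in h1 h2; rewrite -/(key n2 i) -Ek in h3 h4.
rewrite rmorphD /= in h2 h4.
have -> : ((val n2)%:R - (val n1)%:R) * c i - ((Num.floor ((val n2)%:R * c i))%:~R - (Num.floor ((val n1)%:R * c i))%:~R) = fr n2 i - fr n1 i :> R.
  by rewrite /fr; ring.
have q0 : 0 < q.+1%:R :> R by rewrite ltr0n.
rewrite ltr_norml; apply/andP; split.
  rewrite -(ltr_pM2l q0) mulrN mulrV ?unitf_gt0 //; lra.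
rewrite -(ltr_pM2l q0) mulrV ?unitf_gt0 //; lra.
Qed.
Lemma scale_near (R : realType) (E : topologicalLmodType R) (W : set E) (a : E) :
  nbhs 0 W -> \forall t \near (0 : R^o), W (t *: a).
Proof.
move=> W0.
have := scale_continuous ((0 : R^o), a) W.
rewrite /= scale0r => /(_ W0).
case => -[P Q] [/= P0 Qa] PQ.
apply: filterS P0 => t Pt.
by apply: (PQ (t, a)); split => //; apply: nbhs_singleton.
Qed.

Lemma near0_eps (R : realType) (P : R -> Prop) :
  (\forall t \near (0 : R^o), P t) -> exists2 e : R, 0 < e & forall t : R, `|t| < e -> P t.
Proof.
move=> /nbhs_ballP [e e0 H]; exists e => // t te; apply: H.
by rewrite /ball /= sub0r normrN.
Qed.

Lemma add_split (R : realType) (E : topologicalLmodType R) (U : set E) :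
  nbhs 0 U -> exists U1, exists U2, [/\ nbhs 0 U1, nbhs 0 U2 &
    forall x y, U1 x -> U2 y -> U (x + y)].
Proof.
move=> U0.
have := add_continuous ((0 : E), (0 : E)) U.
rewrite /= addr0 => /(_ U0).
case => -[P Q] [/= P0 Q0] PQ.
exists P, Q; split => // x y Px Qy.
by apply: (PQ (x, y)).
Qed.

Lemma scale_const_nbhs (R : realType) (E : topologicalLmodType R) (U : set E) (c : R) :
  nbhs 0 U -> nbhs 0 (fun x => U (c *: x)).
Proof.
move=> U0.
have := scale_continuous ((c : R^o), (0 : E)) U.
rewrite /= scaler0 => /(_ U0).
case => -[P Q] [/= Pc Q0] PQ.
apply: filterS Q0 => x Qx.
by apply: (PQ (c, x)); split => //; apply: nbhs_singleton.
Qed.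

Lemma balanced_nbhs (R : realType) (E : topologicalLmodType R) (V : set E) :
  nbhs 0 V -> exists W, nbhs 0 W /\ forall x, W x -> forall t : R, `|t| <= 1 -> V (t *: x).
Proof.
move=> V0.
have := scale_continuous ((0 : R^o), (0 : E)) V.
rewrite /= scaler0 => /(_ V0).
case => -[P Q] [/= P0 Q0] PQ.
have [e e0 He] := near0_eps P0.
exists (fun x => Q ((e / 2)^-1 *: x)); split; first exact: scale_const_nbhs.
move=> x Qx t t1.
have -> : t *: x = (t * (e / 2)) *: ((e / 2)^-1 *: x).
  by rewrite scalerA -mulrA mulfV ?mulr1 // gt_eqF // divr_gt0.
apply: (PQ (t * (e / 2), _)); split => //=; apply: He.
rewrite normrM (gtr0_norm (divr_gt0 e0 _)) //.
have : 0 < e / 2 by rewrite divr_gt0.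
have : e / 2 < e by rewrite ltr_pdivrMr // ltr_pMr // ltr1n.
move=> h1 h2; have := normr_ge0 t => h3.
nra.
Qed.

Lemma sep0 (R : realType) (E : topologicalLmodType R) (hE : hausdorff_space E) (b : E) :
  b != 0 -> exists V, nbhs 0 V /\ ~ V b.
Proof.
move=> b0; have b0' : (0 : E) != b by rewrite eq_sym.
have [A [oA A0 Ab]] := hausdorff_accessible hE b0'.
exists A; split.
  by apply: open_nbhs_nbhs; split => //; rewrite -in_setE.
by move: Ab; rewrite in_setE.
Qed.

Lemma sum_small (R : realType) (E : topologicalLmodType R) (s : seq E) (U : set E) :
  nbhs 0 U -> exists2 d : R, 0 < d & forall e : E -> R,
    (forall a, a \in s -> `|e a| < d) -> U (\sum_(a <- s) e a *: a).
Proof.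
elim: s U => [|a s IH] U U0.
  by exists 1 => // e _; rewrite big_nil; apply: nbhs_singleton.
have [U1 [U2 [U10 U20 HU]]] := add_split U0.
have [d1 d10 H1] := near0_eps (scale_near a U10).
have [d2 d20 H2] := IH _ U20.
exists (Num.min d1 d2); first by rewrite lt_min d10 d20.
move=> e He; rewrite big_cons; apply: HU.
  by apply: H1; have := He a (mem_head _ _); rewrite lt_min => /andP[].
apply: H2 => x xs.
by have := He x (mem_behead (s := a :: s) xs); rewrite lt_min => /andP[].
Qed.
Lemma ii_iii (R : realType) (E : topologicalLmodType R) (hE : hausdorff_space E) (A : set E) :
  top_indep A -> lin_indep A.
Proof.
case=> A0 H s r us sA sum0 b bs.
apply: contrapT => rb0.
have b0 : b != 0 by apply/eqP => b0; apply: (A0 b (sA b bs)).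
have [V [V0 Vb]] := sep0 hE b0.
have [W [W0 HW]] := balanced_nbhs V0.
have [U [U0 HU]] := H W W0.
have [d d0 Hd] := sum_small s U0.
pose q := Num.trunc (d^-1).
have qd : q.+1%:R^-1 < d.
  rewrite -[d]invrK ltf_pV2 ?posrE ?invr_gt0 ?ltr0n //; exact: truncnS_gt.
pose c a := r a / r b.
have cb : c b = 1 by rewrite /c mulfV //; apply/eqP.
have csum : \sum_(a <- s) c a *: a = 0.
  rewrite /c; under eq_bigr do rewrite mulrC -scalerA.
  by rewrite -scaler_sumr sum0 scaler0.
pose c' (i : 'I_(size s)) := c (nth 0 s i).
have [n1 [n2 [N12 Hn]]] := pigeon q c'.
pose F (n : nat) a := Num.floor (n%:R * c a).
pose z a : int := F n2 a - F n1 a.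
have Fn n : F n b = n%:Z.
  by rewrite /F cb mulr1 -[n%:R]/((n%:Z)%:~R) intrKfloor.
have zb : z b != 0 by rewrite /z !Fn subr_eq0 eqz_nat eq_sym.
have : W (b *~ z b).
  apply: (HU s z us sA _ b bs).
  pose e a := (z a)%:~R - (n2%:R - n1%:R) * c a.
  have -> : \sum_(a <- s) a *~ z a = \sum_(a <- s) e a *: a.
    rewrite /e; under [RHS]eq_bigr do rewrite scalerBl -scalerA.
    rewrite sumrB -scaler_sumr csum scaler0 subr0.
    by apply: eq_bigr => a _; rewrite scaler_int.
  apply: Hd => a ais.
  have ia : (index a s < size s)%N by rewrite index_mem.
  have := Hn (Ordinal ia); rewrite /c' /= nth_index // => h.
  apply: lt_trans qd; rewrite -normrN; move: h.
  rewrite /e /z /F rmorphB /= => h; apply: le_lt_trans h; rewrite le_eqVlt; apply/orP; left; apply/eqP; congr (Num.norm _); ring.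
move=> Wb; apply: Vb.
have -> : b = ((z b)%:~R : R)^-1 *: (b *~ z b).
  by rewrite -[b *~ z b]scaler_int scalerA mulVf ?scale1r // intr_eq0.
apply: HW => //.
rewrite normfV invr_le1 ?unitfE ?normr_eq0 ?intr_eq0 //; last by rewrite normr_gt0 intr_eq0.
by rewrite -intr_norm ler1z -gtz0_ge1 normr_gt0.
Qed.
Lemma coord_cont (R : realType) n (i : 'I_n) : continuous (fun v : 'rV[R]_n => v ord0 i).
Proof.
move=> v B /= Bv; exists (fun _ b => if b == i then B else setT).
  move=> a b; case: eqP => [->|_]; [by rewrite (ord1 a)|exact: filterT].
by move=> w /(_ ord0 i); rewrite eqxx.
Qed.

Lemma cont_add (R : realType) (T : topologicalType) (E : topologicalLmodType R) (f g : T -> E) :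
  continuous f -> continuous g -> continuous (fun x => f x + g x).
Proof.
move=> cf cg x.
apply: (@continuous_comp _ _ _ (fun x => (f x, g x)) (fun z : E * E => z.1 + z.2)).
  apply: cvg_pair; [exact: cf | exact: cg].
exact: add_continuous.
Qed.

Lemma cont_scale (R : realType) (T : topologicalType) (E : topologicalLmodType R) (f : T -> R) (c : E) :
  continuous f -> continuous (fun x => f x *: c).
Proof.
move=> cf x.
apply: (@continuous_comp _ _ _ (fun x => ((f x : R^o), c)) (fun z : R^o * E => z.1 *: z.2)).
  apply: (@cvg_pair _ _ _ _ (nbhs (f x : R^o)) (nbhs c)); [exact: cf | exact: cvg_cst].
exact: scale_continuous.
Qed.

Lemma cont_sum (R : realType) (T : topologicalType) (E : topologicalLmodType R) (I : Type) (r : seq I) (F : I -> T -> E) :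
  (forall i, continuous (F i)) -> continuous (fun x => \sum_(i <- r) F i x).
Proof.
move=> H; elim: r => [|i r IH].
  have -> : (fun x => \sum_(i <- [::]) F i x) = fun _ => 0 by apply: funext => x; rewrite big_nil.
  exact: cst_continuous.
have -> : (fun x => \sum_(j <- i :: r) F j x) = fun x => F i x + \sum_(j <- r) F j x.
  by apply: funext => x; rewrite big_cons.
exact: cont_add.
Qed.

Lemma KL (R : realType) (E : topologicalLmodType R) (hE : hausdorff_space E) n (x : 'I_n -> E) :
  (forall v : 'rV[R]_n, \sum_i v ord0 i *: x i = 0 -> forall i, v ord0 i = 0) ->
  forall eps : R, 0 < eps -> exists U, nbhs 0 U /\
    forall v : 'rV[R]_n, U (\sum_i v ord0 i *: x i) -> forall i, `|v ord0 i| < eps.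
Proof.
move=> indep eps eps0.
pose f (v : 'rV[R]_n) := \sum_i v ord0 i *: x i.
have fc : continuous f.
  by apply: cont_sum => i; apply: cont_scale; exact: coord_cont.
have fZ c v : f (c *: v) = c *: f v.
  by rewrite /f scaler_sumr; apply: eq_bigr => j _; rewrite mxE scalerA.
pose K (i : 'I_n) := [set v : 'rV[R]_n | forall j, (if j == i then [set 1] else `[-1, 1]%classic) (v ord0 j)].
have Kc i : compact (K i).
  have := @rV_compact R n (fun j => if j == i then [set 1] else `[-1, 1]%classic); apply.
  by move=> j; case: eqP => _; [exact: compact_set1 | exact: segment_compact].
have C0 i : nbhs 0 (~` (f @` K i)).
  apply: open_nbhs_nbhs; split.
    apply: closed_openC; apply: compact_closed hE _; apply: continuous_compact => //.
    exact: continuous_subspaceT.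
  move=> [v Kv fv0]; have := indep v fv0 i; have := Kv i; rewrite eqxx /= => ->.
  by apply/eqP; exact: oner_neq0.
have C : nbhs 0 (fun y => forall i, ~ (f @` K i) y).
  by apply: filter_forall => i; exact: C0 i.
have [W [W0 HW]] := balanced_nbhs C.
exists (fun y => W (eps^-1 *: y)); split; first exact: scale_const_nbhs.
move=> v Wv i; rewrite ltNge; apply/negP => vi.
pose w := eps^-1 *: v.
have wi : 1 <= `|w ord0 i|.
  rewrite mxE normrM gtr0_norm ?invr_gt0 //.
  rewrite -(mulVf (lt0r_neq0 eps0)) ler_wpM2l // invr_ge0 ltW //.
case: (@arg_maxP _ _ _ i predT (fun j => `|w ord0 j|) isT) => j _ Hj.
set m := w ord0 j in Hj.
have m1 : 1 <= `|m| by apply: le_trans wi (Hj i isT).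
have m0 : 0 < `|m| by apply: lt_le_trans m1.
have mn0 : m != 0 by rewrite -normr_gt0.
pose u := m^-1 *: w.
have Ku : K j u.
  move=> k; rewrite mxE; case: eqP => [->|_] /=; first by rewrite mulVf.
  rewrite in_itv /= -ler_norml normrM normfV mulrC ler_pdivrMr // mul1r.
  exact: Hj.
have := HW _ Wv m^-1.
rewrite normfV invr_le1 ?unitfE ?normr_eq0 // => /(_ m1) /(_ j).
apply; exists u => //.
by rewrite /u /w !fZ.
Qed.

Lemma sum_ord (R : realType) (E : topologicalLmodType R) (s : seq E) (F : E -> E) :
  \sum_(a <- s) F a = \sum_(i < size s) F s`_i.
Proof. by rewrite (big_nth 0) big_mkord. Qed.

Lemma near_all (R : realType) (E : topologicalLmodType R) (s : seq E) (P : E -> R -> Prop) :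
  (forall a, \forall t \near (0 : R^o), P a t) ->
  \forall t \near (0 : R^o), forall a, a \in s -> P a t.
Proof.
move=> H; elim: s => [|a s IH].
  by apply: filterS (H 0) => t _ a; rewrite in_nil.
apply: filterS (filterI (H a) IH) => t [h1 h2] b.
by rewrite in_cons => /orP[/eqP->|]; auto.
Qed.

Lemma i_ii (R : realType) (E : topologicalLmodType R) (A : set E) :
  top_lin_indep A -> top_indep A.
Proof.
case=> A0 H; split => // W W0.
have [U [U0 HU]] := H W W0.
exists U; split => // s z us sA Us a ais.
rewrite -scaler_int; apply: (HU s (fun a => (z a)%:~R)) => //.
by under eq_bigr do rewrite scaler_int.
Qed.

Lemma iii_i (R : realType) (E : topologicalLmodType R) (hE : hausdorff_space E) (A : set E) :
  finite_set A -> lin_indep A -> top_lin_indep A.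
Proof.
move=> /finite_seqP [s0 As0] li.
pose sA := undup s0.
have AsA a : A a <-> a \in sA by rewrite As0 mem_undup.
have usA : uniq sA by exact: undup_uniq.
split.
  move=> a Aa a0; rewrite /= in a0; subst a.
  have h : forall b, b \in [:: (0 : E)] -> A b by move=> b; rewrite mem_seq1 => /eqP ->.
  have := li [:: 0] (fun _ => 1) isT h; rewrite big_seq1 scaler0 => /(_ erefl 0).
  by rewrite mem_seq1 eqxx => /(_ isT) /eqP; rewrite oner_eq0.
move=> W W0.
pose n := size sA.
have indep (v : 'rV[R]_n) : \sum_i v ord0 i *: sA`_i = 0 -> forall i, v ord0 i = 0.
  move=> v0 i.
  pose r a := v ord0 (insubd i (index a sA)).
  have rE (j : 'I_n) : r sA`_j = v ord0 j.
    by rewrite /r; congr (v ord0 _); apply: val_inj; rewrite val_insubd index_uniq // ltn_ord.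
  have := li sA r usA (fun a => (AsA a).2).
  rewrite sum_ord.
  under eq_bigr do rewrite rE.
  move=> /(_ v0 sA`_i (mem_nth _ (ltn_ord i))).
  by rewrite rE.
have [eps eps0 Heps] := near0_eps (@near_all R E sA (fun a t => W (t *: a)) (fun a => @scale_near _ _ W a W0)).
have [U [U0 HU]] := KL hE indep eps0.
exists U; split => // s r us sAs Us a ais.
pose v := \row_(i < n) (if sA`_i \in s then r sA`_i else 0).
have vE : \sum_i v ord0 i *: sA`_i = \sum_(a <- s) r a *: a.
  under eq_bigr do rewrite mxE.
  rewrite -(sum_ord sA (fun a => (if a \in s then r a else 0) *: a)).
  under eq_bigr do rewrite (fun_if (fun c => c *: _)) scale0r.
  rewrite -big_mkcond -big_filter; apply: perm_big.
  apply: uniq_perm => //; first exact: filter_uniq.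
  move=> b; rewrite mem_filter; apply/andP/idP => [[]//|bs]; split => //.
  by apply/AsA/sAs.
have ai : (index a sA < n)%N by rewrite index_mem; apply/AsA/sAs.
have := HU v; rewrite vE => /(_ Us (Ordinal ai)).
rewrite mxE /= nth_index; last by apply/AsA/sAs.
rewrite ais => ra.
by apply: Heps => //; apply/AsA/sAs.
Qed.

Unset Implicit Arguments.
Set Strict Implicit.

Theorem lemma3p3 (R : realType) (E : topologicalLmodType R)
  (hE : hausdorff_space E) (A : set E) :
  (top_lin_indep A -> top_indep A) /\
  (top_indep A -> lin_indep A) /\
  (finite_set A ->
     (top_lin_indep A <-> top_indep A) /\ (top_indep A <-> lin_indep A)).
Proof.
split; first exact: i_ii.
split; first exact: ii_iii.
move=> fA; split; split.
- exact: i_ii.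
- by move=> /(ii_iii hE) /(iii_i hE fA).
- exact: ii_iii.
- by move=> /(iii_i hE fA) /i_ii.
Qed.
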